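(* Let $(q_n)$ be the Fibonacci Quilt sequence and let $m$ be a positive integer. If $m=c_1q_1+c_2q_2+\cdots+c_nq_n$ with nonnegative integers $c_i$ is any decomposition $\mathcal D(m)$ of $m$ as a sum of Fibonacci Quilt numbers (not necessarily FQ-legal, repetitions allowed), with number of summands $c_1+\cdots+c_n$, then the number of summands of the Greedy-6 decomposition $\mathcal G(m)$ is at most $c_1+c_2+\cdots+c_n$.
   Context: Given an increasing sequence of positive integers $(q_i)_{i\ge1}$, an FQ-legal decomposition of an integer $m\ge0$ is an expression $m=q_{\ell_1}+q_{\ell_2}+\cdots+q_{\ell_t}$ ($t\ge0$, the empty sum representing $0$) with distinct indices $\ell_1>\ell_2>\cdots>\ell_t$ such that $|\ell_i-\ell_j|\notin\{1,3,4\}$ for all $i,j$, and $\{1,3\}\not\subset\{\ell_1,\dots,\ell_t\}$. The Fibonacci Quilt sequence is the increasing sequence of positive integers $(q_i)_{i\ge1}$ in which each $q_i$ is the smallest positive integer having no FQ-legal decomposition using only $q_1,\dots,q_{i-1}$. Its first terms are $1,2,3,4,5,7,9,12,16,21,28,37,49,\dots$. The Greedy-6 decomposition $\mathcal G(m)$ of a positive integer $m$ is defined recursively: if $m=q_n$ for some $n$, then $\mathcal G(m)=q_n$; if $m=6$, then $\mathcal G(6)=q_4+q_2$; otherwise ($m\ge q_6=7$ and $m$ not a term of the sequence) let $\ell_1$ be such that $q_{\ell_1}<m<q_{\ell_1+1}$, set $x=m-q_{\ell_1}>0$, and $\mathcal G(m)=q_{\ell_1}+\mathcal G(x)$. *)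

(* Defs.v *)
From mathcomp Require Import all_boot.
Set Implicit Arguments. Unset Strict Implicit. Unset Printing Implicit Defensive.

(* Sequences are indexed from 1: q 1, q 2, ...; the value q 0 is irrelevant. *)

Definition FQ_legal_below (q : nat -> nat) (i m : nat) (s : seq nat) : Prop :=
  [/\ uniq s,
      all (fun l => (0 < l) && (l < i)) s,
      (forall a b, a \in s -> b \in s ->
          [/\ b + 1 != a, b + 3 != a & b + 4 != a]),
      ~~ ((1 \in s) && (3 \in s))
    & \sum_(l <- s) q l = m].

Definition is_FQ_seq (q : nat -> nat) : Prop :=
  (forall i, 0 < i -> q i < q i.+1) /\
  (forall i, 0 < i ->
     [/\ 0 < q i,
         (forall s, ~ FQ_legal_below q i (q i) s)
       & (forall k, 0 < k < q i -> exists s, FQ_legal_below q i k s)]).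

Inductive greedy6 (q : nat -> nat) : nat -> seq nat -> Prop :=
  | G_term n : 0 < n -> greedy6 q (q n) [:: q n]
  | G_six : (forall n, 0 < n -> q n != 6) -> greedy6 q 6 [:: q 4; q 2]
  | G_step m l s :
      (forall n, 0 < n -> q n != m) -> m != 6 -> 0 < l ->
      q l < m -> m < q l.+1 ->
      greedy6 q (m - q l) s -> greedy6 q m (q l :: s).

(* Main.v *)
Require Import Defs.
From mathcomp Require Import all_boot zify.
Set Implicit Arguments. Unset Strict Implicit. Unset Printing Implicit Defensive.


Fixpoint Q (n : nat) : nat :=
  match n with
  | 0 => 0 | 1 => 1 | 2 => 2 | 3 => 3 | 4 => 4 | 5 => 5 | 6 => 7
  | S ((S (S (S (S k)))) as m) => Q m + Q k
  end.

Lemma QA n : Q (n + 7) = Q (n + 6) + Q (n + 2).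
Proof. by rewrite !addnS addn0. Qed.

Lemma QB n : Q (n + 5) = Q (n + 3) + Q (n + 2).
Proof.
elim: n {-2}n (leqnn n) => [|k IH] n hn.
  by case: n hn.
case: n hn => [|[|[|[|p]]]] hn //.
have h1 := QA (p.+2). have h2 := QA p. have h3 := QA p.+1.
have h4 := IH p.+1 ltac:(lia).
have -> : p.+4 + 5 = p.+2 + 7 by lia.
have -> : p.+4 + 3 = p + 7 by lia.
have -> : p.+4 + 2 = p + 6 by lia.
rewrite h1 h2.
have -> : p.+2 + 6 = p.+1 + 7 by lia.
rewrite h3.
have -> : p.+1 + 6 = p + 7 by lia.
rewrite h2.
move: h4.
have -> : p.+1 + 5 = p + 6 by lia.
have -> : p.+1 + 3 = p + 4 by lia.
have -> : p.+1 + 2 = p + 3 by lia.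
have -> : p.+2 + 2 = p + 4 by lia.
lia.
Qed.

Lemma Qpos n : 0 < Q n.+1.
Proof.
elim: n {-2}n (leqnn n) => [|k IH] n hn; first by case: n hn.
case: n hn => [|[|[|[|[|[|p]]]]]] hn //.
have -> : p.+3.+4 = p + 7 by lia.
rewrite QA. have := IH (p+5) ltac:(lia). have -> : (p+5).+1 = p + 6 by lia. lia.
Qed.

Lemma Qsucc n : Q n < Q n.+1.
Proof.
case: n => [|[|[|[|[|[|p]]]]]] //.
have -> : p.+3.+4 = p + 7 by lia. have -> : p.+2.+4 = p + 6 by lia.
rewrite QA. have := Qpos (p+1). have -> : (p+1).+1 = p + 2 by lia. lia.
Qed.

Lemma Qlt m n : (Q m < Q n) = (m < n).
Proof.
have hom : {homo Q : i j / i < j} by apply: homo_ltn => //; [move=> y x z; exact: ltn_trans | exact: Qsucc].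
case: (ltngtP m n) => [h|h|->]; first exact: hom.
  by apply/negbTE; rewrite -leqNgt ltnW // hom.
by rewrite ltnn.
Qed.

Lemma Qle m n : (Q m <= Q n) = (m <= n).
Proof. by rewrite leqNgt Qlt -leqNgt. Qed.

Lemma Qge n : n <= Q n.
Proof. elim: n => // n IH; have := Qsucc n; lia. Qed.

Lemma Q2 b : Q (b+9) + Q (b+2) = 2 * Q (b+7).
Proof.
have h1 := QA (b+2). have h2 := QA (b+1). have h3 := QB (b+2). have h4 := QB b.
move: h1 h2 h3 h4.
have -> : b+2+7 = b+9 by lia. have -> : b+2+6 = b+8 by lia. have -> : b+2+2 = b+4 by lia.
have -> : b+1+7 = b+8 by lia. have -> : b+1+6 = b+7 by lia. have -> : b+1+2 = b+3 by lia.
have -> : b+2+5 = b+7 by lia. have -> : b+2+3 = b+5 by lia.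
lia.
Qed.

Lemma QAe x y z : 7 <= x -> y = x - 1 -> z = x - 5 -> Q x = Q y + Q z.
Proof.
move=> hx -> ->; have e : x = (x - 7) + 7 by lia.
rewrite {1}e QA; congr (Q _ + Q _); lia.
Qed.

Lemma QBe x y z : 5 <= x -> y = x - 2 -> z = x - 3 -> Q x = Q y + Q z.
Proof.
move=> hx -> ->; have e : x = (x - 5) + 5 by lia.
rewrite {1}e QB; congr (Q _ + Q _); lia.
Qed.

Ltac qa x y z := have := @QAe x y z ltac:(lia) ltac:(lia) ltac:(lia).
Ltac qb x y z := have := @QBe x y z ltac:(lia) ltac:(lia) ltac:(lia).

Lemma I1 b : Q (b+8) + Q (b+7) = Q (b+10).
Proof. qb (b+10) (b+8) (b+7); lia. Qed.
Lemma I2 b : Q (b+9) + Q (b+7) = Q (b+10) + Q (b+4).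
Proof. qa (b+10) (b+9) (b+5); qb (b+7) (b+5) (b+4); lia. Qed.
Lemma I3 b : Q (b+10) + Q (b+7) = Q (b+11) + Q (b+2).
Proof. qa (b+11) (b+10) (b+6); qa (b+7) (b+6) (b+2); lia. Qed.
Lemma I4 b : Q (b+11) + Q (b+7) = Q (b+12).
Proof. qa (b+12) (b+11) (b+7); lia. Qed.


Fixpoint topn k m := match k with 0 => 0 | k'.+1 => if Q k <= m then k else topn k' m end.
Definition top m := topn m m.

Lemma topn_spec k m : Q (topn k m) <= m /\ (forall j, topn k m < j <= k -> m < Q j).
Proof.
elim: k => [|k [IH1 IH2]] /=; first by split => // j; lia.
case: ifP => h; first by split => // j; lia.
have h' : m < Q k.+1 by rewrite ltnNge h.
split => // j hj; case: (ltngtP j k.+1) => [hl|hl|->]; [apply: IH2; lia | lia | lia].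
Qed.

Lemma top_spec m : Q (top m) <= m < Q (top m).+1.
Proof.
have [h1 h2] := topn_spec m m; rewrite /top h1 andTb.
case: (leqP (topn m m).+1 m) => h; first by apply: (h2 (topn m m).+1); apply/andP; split => //; lia.
have hq := Qge (topn m m); have e : topn m m = m by lia. rewrite e; have := Qge m.+1; move=> hh; lia.
Qed.

Lemma top_uniq a m : Q a <= m < Q a.+1 -> top m = a.
Proof.
move=> /andP[h1 h2]; have /andP[h3 h4] := top_spec m.
case: (ltngtP (top m) a) => // h.
- have : Q (top m).+1 <= Q a by rewrite Qle. lia.
- have : Q a.+1 <= Q (top m) by rewrite Qle. lia.
Qed.

Fixpoint Faux fuel m := match fuel with 0 => 0 | f.+1 => if m is 0 then 0 else (Faux f (m - Q (top m))).+1 end.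
Definition F m := Faux m m.

Lemma top_pos m : 0 < m -> 0 < Q (top m).
Proof.
move=> hm; have /andP[_ h] := top_spec m.
case e: (top m) => [|t]; last by exact: Qpos.
by move: h; rewrite e /=; lia.
Qed.

Lemma Faux_ind k k' m : m <= k -> m <= k' -> Faux k m = Faux k' m.
Proof.
elim: k k' m => [|k IH] [|k'] m /=; try (case: m => //; lia).
case: m => // m h1 h2; congr _.+1; apply: IH; have := top_pos (ltn0Sn m); lia.
Qed.

Lemma F0 : F 0 = 0. Proof. by []. Qed.

Lemma F_top a m : 0 < m -> Q a <= m < Q a.+1 -> F m = (F (m - Q a)).+1.
Proof.
move=> hm ha; rewrite -(top_uniq ha) /F.
case: m hm {ha} => // m _ /=; congr _.+1; apply: Faux_ind => //; have := top_pos (ltn0Sn m); lia.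
Qed.


Lemma small_check : all (fun x => all (fun j => F (x + Q j) <= (F x).+1) (iota 0 11)) (iota 0 9).
Proof. by vm_compute. Qed.

Lemma small x j : x <= 8 -> j <= 10 -> F (x + Q j) <= (F x).+1.
Proof.
move=> hx hj; have := small_check; move/allP/(_ x); rewrite mem_iota => /(_ ltac:(lia)).
by move/allP/(_ j); rewrite mem_iota => /(_ ltac:(lia)).
Qed.

Lemma Qpos' j : 0 < j -> 0 < Q j.
Proof. by case: j => // j _; exact: Qpos. Qed.

Lemma Q7 : Q 7 = 9. Proof. by []. Qed.

Lemma mainP x j : 0 < j -> F (x + Q j) <= (F x).+1.
Proof.
elim: x {-2}x (leqnn x) j => [|k IH] x hx j hj.
  have -> : x = 0 by lia.
  rewrite add0n (@F_top j); first by rewrite subnn F0.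
    exact: Qpos'.
  by rewrite leqnn Qsucc.
case: (posnP x) => [->|hx0].
  rewrite add0n (@F_top j); first by rewrite subnn F0.
    exact: Qpos'.
  by rewrite leqnn Qsucc.
have /andP[ha1 ha2] := top_spec x.
set a := top x in ha1 ha2.
have hQa : 0 < Q a by exact: top_pos.
have ha0 : 0 < a by case: (a) hQa.
set r := x - Q a.
have Fx : F x = (F r).+1 by apply: F_top => //; rewrite ha1 ha2.
have hr : r < x by rewrite /r; lia.
have T1 : forall c, 0 < c -> r + Q c = x + Q j -> F (x + Q j) <= (F x).+1.
  move=> c hc <-; rewrite Fx; apply: leq_trans (IH r _ c hc) _; lia.
have T2 : forall c d, 0 < c -> 0 < d -> Q d + r < x -> (Q d + r) + Q c = x + Q j ->
     F (x + Q j) <= (F x).+1.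
  move=> c d hc hd hlt <-; rewrite Fx.
  apply: leq_trans (IH (Q d + r) _ c hc) _; first lia.
  rewrite addnC; have := IH r ltac:(lia) d hd; lia.
case: (leqP (a + 5) j) => hja.
  have hj6 : 6 <= j by lia.
  have eq1 : Q j.+1 = Q j + Q (j - 4) by apply: QAe; lia.
  have : Q a.+1 <= Q (j - 4) by rewrite Qle; lia.
  move=> hle.
  rewrite (@F_top j); first by rewrite addnK.
    lia.
  rewrite eq1; lia.
case: (leqP x 8) => hx8.
  have : Q a < Q 7 by rewrite Q7; lia.
  rewrite Qlt => ha7.
  apply: small => //; lia.
have ha7 : 7 <= a.
  have : Q 7 < Q a.+1 by rewrite Q7; lia.
  by rewrite Qlt.
have ex : x = r + Q a by rewrite /r; lia.
have [b eb] : exists b, a = b + 7 by exists (a - 7); lia.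
rewrite eb in ex ha1 ha2 hQa.
case: (ltngtP j a) => hja'.
- apply: (T2 a j) => //.
  + have : Q j < Q (b+7) by rewrite Qlt; lia. lia.
  + rewrite ex eb; lia.
- have : j = b + 8 \/ j = b + 9 \/ j = b + 10 \/ j = b + 11 by lia.
  case=> [ej|[ej|[ej|ej]]].
  + apply: (T1 (b+10)); first lia. rewrite ex ej; have := I1 b; lia.
  + apply: (T2 (b+10) (b+4)); try lia.
      have : Q (b+4) < Q (b+7) by rewrite Qlt; lia. lia.
    rewrite ex ej; have := I2 b; lia.
  + apply: (T2 (b+11) (b+2)); try lia.
      have : Q (b+2) < Q (b+7) by rewrite Qlt; lia. lia.
    rewrite ex ej; have := I3 b; lia.
  + apply: (T1 (b+12)); first lia. rewrite ex ej; have := I4 b; lia.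
-   apply: (T2 (b+9) (b+2)); try lia.
    have : Q (b+2) < Q (b+7) by rewrite Qlt; lia. lia.
  rewrite ex hja' eb; have := Q2 b; lia.
Qed.


Lemma sum_rem (G : nat -> nat) s x : x \in s -> \sum_(l <- s) G l = G x + \sum_(l <- rem x s) G l.
Proof. by move=> h; rewrite (perm_big _ (perm_to_rem h)) big_cons. Qed.

Lemma sum_as_nat (G : nat -> nat) s N : uniq s -> (forall y, y \in s -> 0 < y < N) ->
  \sum_(l <- s) G l = \sum_(1 <= l < N) (if l \in s then G l else 0).
Proof.
move=> us hs; rewrite -[in RHS]big_mkcond -[in RHS]big_filter; apply: perm_big.
apply: uniq_perm => //; first by rewrite filter_uniq // iota_uniq.
move=> y; rewrite mem_filter mem_iota.
case hy: (y \in s) => //=; have := hs y hy; lia.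
Qed.

Lemma sum0 s : (forall y, y \in s -> y <= 0) -> \sum_(l <- s) Q l = 0.
Proof. by move=> h; rewrite big_seq big1 // => y /h; rewrite leqn0 => /eqP ->. Qed.

Lemma NB k s : uniq s -> (forall y, y \in s -> y <= k) ->
  (forall a b, a \in s -> b \in s -> b + 1 != a) -> \sum_(l <- s) Q l < Q (k + 3).
Proof.
elim: k {-2}k (leqnn k) s => [|K IH] k hk s us hs hp.
  have -> : k = 0 by lia. by rewrite sum0 //; move=> y /hs; lia.
case hks: (k \in s).
  rewrite (sum_rem _ hks).
  have hrem : forall y, y \in rem k s -> y != k /\ y \in s.
    by move=> y; rewrite (mem_rem_uniq _ us) => /andP[].
  case: (leqP k 1) => hk1.
    rewrite sum0; last first.
      move=> y /hrem [h1 h2]; have := hs y h2; have := hp k y hks h2; lia.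
    case: k hk hks hs hp hk1 {hrem} => [|[|]] //.
  have := IH (k - 2) ltac:(lia) (rem k s) (rem_uniq _ us).
  have e : k + 3 = (k+3) - 0 by lia.
  have := @QBe (k+3) (k+1) k ltac:(lia) ltac:(lia) ltac:(lia).
  have -> : k - 2 + 3 = k + 1 by lia.
  move=> eQ h; rewrite eQ; suff : \sum_(l <- rem k s) Q l < Q (k + 1) by lia.
  apply: h.
    move=> y /hrem [h1 h2]; have := hs y h2; have := hp k y hks h2; lia.
  move=> a b /hrem [_ ha] /hrem [_ hb]; exact: hp.
case: k hk hks hs hp => [|k] hk hks hs hp.
  by rewrite sum0.
apply: leq_trans (IH k ltac:(lia) s us _ hp) _.
  move=> y hy; have := hs y hy; case: (ltngtP y k.+1) => // e; subst y; by rewrite hy in hks.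
apply: ltnW; rewrite Qlt; lia.
Qed.

Lemma legal_cons i k t s : 0 < t < i -> (forall y, y \in s -> y + 4 < t) ->
  t != 1 -> t != 3 -> FQ_legal_below Q (t - 4) k s ->
  FQ_legal_below Q i (Q t + k) (t :: s).
Proof.
move=> ht hs t1 t3 [us als hp h13 <-]; split.
- rewrite /= us andbT; apply/negP => /hs; lia.
- rewrite /= ht /=; apply/allP => y hy; move/allP: als => /(_ y hy) /andP[h1 h2]; have := hs y hy; lia.
- move=> a b; rewrite !inE => /orP[/eqP->|ha] /orP[/eqP->|hb].
  + split; apply/eqP; lia.
  + have := hs b hb; split; apply/eqP; lia.
  + have := hs a ha; split; apply/eqP; lia.
  + exact: hp.
- by rewrite !inE ![_ == t]eq_sym (negbTE t1) (negbTE t3).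
- by rewrite big_cons.
Qed.


Lemma legal_nil i : FQ_legal_below Q i 0 [::].
Proof. by split => //; rewrite big_nil. Qed.

Lemma Eq k i : k < Q i -> exists s, FQ_legal_below Q i k s.
Proof.
elim: k {-2}k (leqnn k) i => [|K IH] k hk i hki.
  have -> : k = 0 by lia. by exists [::]; exact: legal_nil.
case: (leqP k 6) => hk6.
  case: (posnP k) => [->|hk0]; first by exists [::]; exact: legal_nil.
  case: (k =P 6) => [e6|n6].
    exists [:: 4; 2]; rewrite e6 in hki *.
    have : Q 4 < Q i by apply: leq_ltn_trans hki. rewrite Qlt => hi.
    split => //.
    + by rewrite /= hi /=; apply/andP; split => //; lia.
    + by move=> a b; rewrite !inE => /orP[/eqP->|/eqP->] /orP[/eqP->|/eqP->].
    + by rewrite !big_cons big_nil.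
  have ek : Q k = k by case: k hk6 hk0 n6 {hk hki} => [|[|[|[|[|[|[|]]]]]]].
  have : Q k < Q i by rewrite ek. rewrite Qlt => hi.
  exists [:: k]; split => //.
  + by rewrite /= andbT hk0 hi.
  + by move=> a b; rewrite !inE => /eqP-> /eqP->; split; apply/eqP; lia.
  + by rewrite !inE; apply/negP => /andP[/eqP <-].
  + by rewrite big_cons big_nil ek addn0.
have /andP[ht1 ht2] := top_spec k.
set t := top k in ht1 ht2.
have ht6 : 6 <= t.
  have : Q 6 < Q t.+1 by apply: leq_ltn_trans ht2. by rewrite Qlt.
have ti : t < i by rewrite -Qlt; lia.
have eQ : Q t.+1 = Q t + Q (t - 4) by apply: QAe; lia.
have hQt : 0 < Q t by apply: Qpos'; lia.
have [s hs] := IH (k - Q t) ltac:(lia) (t - 4) ltac:(lia).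
exists (t :: s).
have -> : k = Q t + (k - Q t) by lia.
apply: legal_cons => //; try (apply/eqP; lia).
move=> y hy; case: hs => _ /allP /(_ y hy) => h _ _ _; lia.
Qed.

Fixpoint allbits n : seq (seq bool) :=
  if n is n'.+1 then [seq b :: l | b <- [:: true; false], l <- allbits n'] else [:: [::]].

Lemma allbitsP B : B \in allbits (size B).
Proof.
elim: B => [|b B IH] //.
have -> : allbits (size (b :: B)) = [seq x :: l | x <- [:: true; false], l <- allbits (size B)] by [].
by apply: (allpairs_f (fun x l => x :: l)) => //; case: b.
Qed.

Definition bit (B : seq bool) l := nth false B l.-1.
Definition forb_pairs := [seq (b + d, b) | b <- iota 1 8, d <- [:: 1; 3; 4]].
Definition okB i B := [&& all (fun l => bit B l ==> (l < i)) (iota 1 8),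
  all (fun p => ~~ (bit B p.1 && bit B p.2)) forb_pairs &
  ~~ (bit B 1 && bit B 3)].
Definition sumB B := sumn [seq (if bit B l then Q l else 0) | l <- iota 1 8].

Lemma fin_check : all (fun i => all (fun B => okB i B ==> (sumB B != Q i)) (allbits 8)) (iota 1 9).
Proof. by vm_compute. Qed.

Lemma small_N i s : 0 < i <= 9 -> FQ_legal_below Q i (Q i) s -> False.
Proof.
move=> hi [us als hp h13 hsum].
set B := [seq l \in s | l <- iota 1 8].
have hbit : forall l, 0 < l <= 8 -> bit B l = (l \in s).
  move=> l hl; rewrite /bit /B (nth_map 0); last by rewrite size_iota; lia.
  by rewrite nth_iota; [congr (_ \in s); lia | lia].
have hels : forall y, y \in s -> 0 < y < i by move=> y hy; move/allP: als => /(_ y hy).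
have hs9 : \sum_(l <- s) Q l = sumB B.
  rewrite (@sum_as_nat _ s 9) //; last by move=> y /hels; lia.
  rewrite /sumB sumnE big_map /index_iota.
  apply: eq_big_seq => l; rewrite mem_iota => hl; rewrite hbit //; lia.
have hok : okB i B.
  apply/and3P; split.
  - apply/allP => l; rewrite mem_iota => hl; rewrite hbit; last lia.
    by apply/implyP => /hels /andP[].
  - apply/allP => -[x y]; rewrite /forb_pairs => /allpairsP [[b d] /= [hb hd [-> ->]]] /=.
    have hb' : 1 <= b < 1 + 8 by rewrite -mem_iota.
    case: (leqP (b + d) 8) => hbd.
      rewrite !hbit; try lia.
      apply/negP => /andP[h1 h2]; have [] := hp _ _ h1 h2.
      by move: hd; rewrite !inE => /or3P[]/eqP->; rewrite eqxx.
    have e : bit B (b + d) = false by rewrite /bit nth_default // size_map size_iota; lia.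
    by rewrite e.
  - by rewrite !hbit.
have := fin_check; move/allP => /(_ i); rewrite mem_iota => /(_ ltac:(lia)).
move/allP => /(_ B); rewrite -(_ : size B = 8); last by rewrite size_map size_iota.
by move=> /(_ (allbitsP B)); rewrite hok /= -hs9 hsum eqxx.
Qed.

Lemma legal_sub i i' m s s' : FQ_legal_below Q i m s -> uniq s' ->
  (forall y, y \in s' -> y \in s /\ 0 < y < i') ->
  FQ_legal_below Q i' (\sum_(l <- s') Q l) s'.
Proof.
move=> [us als hp h13 _] us' hs'; split => //.
- by apply/allP => y /hs' [].
- by move=> a b /hs' [ha _] /hs' [hb _]; exact: hp.
- apply/negP => /andP[/hs' [h1 _] /hs' [h3 _]]; move/negP: h13; apply; by rewrite h1 h3.
Qed.

Lemma sum_ge (G : nat -> nat) s x : x \in s -> G x <= \sum_(l <- s) G l.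
Proof. by move=> h; rewrite (sum_rem _ h) leq_addr. Qed.

Lemma Nq i s : 0 < i -> FQ_legal_below Q i (Q i) s -> False.
Proof.
elim: i {-2}i (leqnn i) s => [|K IH] i hi s hi0 hL; first lia.
case: (leqP i 9) => hi9; first by apply: (small_N _ hL); lia.
have hL' := hL; case: hL' => us als hp h13 hsum.
have hels : forall y, y \in s -> 0 < y < i by move=> y hy; move/allP: als => /(_ y hy).
have hmem : forall (x : nat) (t : seq nat) (y : nat), uniq t -> y \in rem x t -> y != x /\ y \in t.
  by move=> x t y ut; rewrite (mem_rem_uniq _ ut) => /andP[].
case h1: (i - 1 \in s).
  have e1 : Q i = Q (i - 1) + Q (i - 5) by apply: QAe; lia.
  have hs1 : \sum_(l <- (rem (i - 1) s)) Q l = Q (i - 5) by move: hsum; rewrite (sum_rem _ h1) e1; lia.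
  case h3: (i - 3 \in (rem (i - 1) s)).
    have := sum_ge Q h3; rewrite hs1; have : Q (i - 5) < Q (i - 3) by rewrite Qlt; lia. lia.
  apply: (IH (i - 5) _ (rem (i - 1) s)); [lia | lia |].
  rewrite -hs1; apply: (legal_sub hL); first exact: rem_uniq.
  move=> y hy; have [hy1 hys] := hmem _ _ _ us hy; split => //.
  have := hels y hys; have := hp _ _ h1 hys; case=> /eqP ? /eqP ? /eqP ?.
  have : y != i - 3 by apply/negP => /eqP e; rewrite -e hy in h3.
  move/eqP; move/eqP: hy1; lia.
case h2: (i - 2 \in s).
  have us1 : uniq (rem (i - 2) s) by exact: rem_uniq.
  have e1 : Q i = Q (i - 2) + Q (i - 3) by apply: QBe; lia.
  have hs1 : \sum_(l <- (rem (i - 2) s)) Q l = Q (i - 3) by move: hsum; rewrite (sum_rem _ h2) e1; lia.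
  have hy1 : forall y, y \in (rem (i - 2) s) -> [/\ y \in s, y < i, y != i - 1, y != i - 2 &
        [/\ y != i - 3, y != i - 5 & y != i - 6]].
    move=> y hy; have [hy2 hys] := hmem _ _ _ us hy.
    have := hels y hys; have := hp _ _ h2 hys; case=> /eqP ? /eqP ? /eqP ? /andP[_ ?].
    have : y != i - 1 by apply/negP => /eqP e; rewrite -e hys in h1.
    move=> ?; split => //; split; apply/eqP; lia.
  case h4: (i - 4 \in (rem (i - 2) s)).
    have e2 : Q (i - 3) = Q (i - 4) + Q (i - 8) by apply: QAe; lia.
    have hs2 : \sum_(l <- (rem (i - 4) (rem (i - 2) s))) Q l = Q (i - 8) by move: hs1; rewrite (sum_rem _ h4) e2; lia.
    apply: (IH (i - 8) _ (rem (i - 4) (rem (i - 2) s))); [lia | lia |].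
    rewrite -hs2; apply: (legal_sub hL); first exact: rem_uniq.
    move=> y hy; have [hy4 hys1] := hmem _ _ _ us1 hy.
    have [hys hyi n1 n2 [n3 n5 n6]] := hy1 y hys1; split => //.
    have [_ h4s] := hmem _ _ _ us h4.
    have := hels y hys; have := hp _ _ h4s hys; case=> /eqP ? /eqP ? /eqP ? /andP[? _].
    move/eqP: hy4; move/eqP: n1; move/eqP: n2; move/eqP: n3; move/eqP: n5; move/eqP: n6; lia.
  have := @NB (i - 7) (rem (i - 2) s) us1.
  rewrite hs1; have -> : i - 7 + 3 = i - 4 by lia.
  have : Q (i - 4) < Q (i - 3) by rewrite Qlt; lia.
  move=> hlt hNB; have : Q (i - 3) < Q (i - 4); last lia.
  apply: hNB.
    move=> y hy; have [hys hyi n1 n2 [n3 n5 n6]] := hy1 y hy.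
    have : y != i - 4 by apply/negP => /eqP e; rewrite -e hy in h4.
    move/eqP; move/eqP: n1; move/eqP: n2; move/eqP: n3; move/eqP: n5; move/eqP: n6; lia.
  move=> a b /hy1 [ha _ _ _ _] /hy1 [hb _ _ _ _]; by case: (hp _ _ ha hb).
have := @NB (i - 3) s us.
rewrite hsum; have -> : i - 3 + 3 = i by lia.
move=> hNB; have : Q i < Q i; last by rewrite ltnn.
apply: hNB.
  move=> y hy; have := hels y hy.
  have : y != i - 1 by apply/negP => /eqP e; rewrite -e hy in h1.
  have : y != i - 2 by apply/negP => /eqP e; rewrite -e hy in h2.
  move/eqP => ? /eqP ? /andP[? ?]; lia.
move=> a b ha hb; by case: (hp _ _ ha hb).
Qed.


Lemma legal_transfer (q1 q2 : nat -> nat) i m s : (forall k, 0 < k < i -> q1 k = q2 k) ->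
  FQ_legal_below q1 i m s -> FQ_legal_below q2 i m s.
Proof.
move=> he [us als hp h13 hs]; split => //; rewrite -hs.
apply: eq_big_seq => l hl; symmetry; apply: he; by move/allP: als => /(_ l hl).
Qed.

Lemma qQ q : is_FQ_seq q -> forall i, 0 < i -> q i = Q i.
Proof.
move=> [_ hq] i.
elim: i {-2}i (leqnn i) => [|K IH] i hi hi0; first lia.
have [hqpos hno hall] := hq i hi0.
have he : forall k, 0 < k < i -> q k = Q k by move=> k /andP[h1 h2]; apply: IH; lia.
have he' : forall k, 0 < k < i -> Q k = q k by move=> k hk; rewrite he.
case: (ltngtP (q i) (Q i)) => // h.
- have [s hs] := Eq h. exfalso; by apply: (hno s); apply: legal_transfer hs.
- have [s hs] := hall (Q i) ltac:(have := Qpos' hi0; lia).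
  exfalso; apply: (Nq hi0); exact: legal_transfer hs.
Qed.

Lemma F6 : F 6 = 2. Proof. by vm_compute. Qed.

Lemma greedy_size q m g : (forall n, 0 < n -> q n = Q n) -> greedy6 q m g -> size g = F m.
Proof.
move=> he; elim => {m g}.
- move=> n hn; rewrite he //.
  rewrite (@F_top n); [by rewrite subnn F0 | exact: Qpos' | by rewrite leqnn Qsucc].
- by move=> _; rewrite F6.
- move=> m l s _ _ hl hlm hml _ IH /=; rewrite IH (@F_top l m).
  + by rewrite he.
  + lia.
  + by rewrite -!he // ltnW //= hml.
Qed.

Lemma Qne6 n : Q n != 6.
Proof.
apply/negP => /eqP e; have := Qge n; rewrite e => hn.
by move: e; case: n hn => [|[|[|[|[|[|[|]]]]]]].
Qed.

Lemma greedy_ex q m : (forall n, 0 < n -> q n = Q n) -> 0 < m -> exists g, greedy6 q m g.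
Proof.
move=> he.
elim: m {-2}m (leqnn m) => [|K IH] m hm hm0; first lia.
have /andP[ha1 ha2] := top_spec m.
set a := top m in ha1 ha2.
have ha0 : 0 < a by case: (a) ha2 => //= h; lia.
case: (Q a =P m) => [ea|na].
  exists [:: q a]; rewrite -ea -he //; exact: G_term.
case: (m =P 6) => [e6|n6].
  exists [:: q 4; q 2]; rewrite e6; apply: G_six => n hn; rewrite he //; exact: Qne6.
have hQa : 0 < Q a by exact: Qpos'.
have [g hg] := IH (m - Q a) ltac:(lia) ltac:(lia).
exists (q a :: g); apply: G_step => //.
- move=> n hn; rewrite he //; apply/eqP => en.
  have : top m = n by apply: top_uniq; rewrite -en leqnn Qsucc.
  by move=> etn; apply: na; rewrite /a etn.
- exact/eqP.
- rewrite he //; lia.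
- by rewrite he.
- by rewrite he.
Qed.

Lemma addmul x c j : 0 < j -> F (x + c * Q j) <= F x + c.
Proof.
move=> hj; elim: c => [|c IH]; first by rewrite mul0n !addn0.
rewrite mulSn addnCA addnC; apply: leq_trans (mainP _ hj) _; lia.
Qed.

Lemma sumF (c : nat -> nat) n : F (\sum_(1 <= i < n.+1) c i * Q i) <= \sum_(1 <= i < n.+1) c i.
Proof.
elim: n => [|n IH]; first by rewrite !big_geq.
rewrite !(@big_nat_recr _ _ _ n.+1 1) //=.
apply: leq_trans (addmul _ _ (ltn0Sn n)) _; lia.
Qed.

Theorem mainTheorem18 (q : nat -> nat) (hq : is_FQ_seq q)
    (m : nat) (hm : 0 < m) (n : nat) (c : nat -> nat)
    (hD : m = \sum_(1 <= i < n.+1) c i * q i) :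
  (exists g, greedy6 q m g) /\
  (forall g, greedy6 q m g -> size g <= \sum_(1 <= i < n.+1) c i).
Proof.
have he := qQ hq.
split; first exact: greedy_ex.
move=> g hg; rewrite (greedy_size he hg) hD.
rewrite (@eq_big_nat _ _ _ 1 n.+1 _ (fun i => c i * Q i)); first exact: sumF.
by move=> i /andP[hi _]; rewrite he.
Qed.
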